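(* Let $\Pi_1=(\mathcal{A},\mathcal{E},\mathcal{R}_1)$ and $\Pi_2=(\mathcal{A},\mathcal{E},\mathcal{R}_2)$ be epistemic logic programs with the same SE-function, i.e. $\mathcal{SE}_{\Pi_1}(\Phi)=\mathcal{SE}_{\Pi_2}(\Phi)$ for every guess $\Phi\subseteq\mathcal{E}$. Then $\Pi_1$ and $\Pi_2$ are CWV-equivalent (and hence WV-equivalent).
   Context: A literal over a set of atoms $\mathcal{A}$ is an atom $a$ or $\neg a$. An interpretation is $I\subseteq\mathcal{A}$; $I\models a$ iff $a\in I$, $I\models\neg\ell$ iff $I\not\models\ell$. A (plain) logic program $(\mathcal{A},\mathcal{R})$ has rules $a_1\vee\cdots\vee a_l \leftarrow a_{l+1},\ldots,a_m,\neg\ell_1,\ldots,\neg\ell_n$ ($\ell_i$ literals); $H(r)$ head, $B(r)$ body, $B^+(r)=\{a_{l+1},\ldots,a_m\}$; $M\models r$ iff $M\models B(r)$ implies $M\cap H(r)\neq\emptyset$; $\mathrm{Mods}(\Pi)$ is the set of models. GL-reduct: $\Pi^I=(\mathcal{A},\{H(r)\leftarrow B^+(r)\mid r\in\mathcal{R},\ I\models\neg\ell\ \forall\neg\ell\in B(r)\})$. Answer set: model $M$ of $\Pi$ such that no $M'\subset M$ is a model of $\Pi^M$; $AS(\Pi)$ the set of answer sets ($\neg\neg\neg a$ treated as $\neg a$). An SE-model of $\Pi$ is $(X,Y)$ with $X\subseteq Y\subseteq\mathcal{A}$, $Y\models\Pi$, $X\models\Pi^Y$; $\mathrm{SE}(\Pi)$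 the set of SE-models. An ELP is $(\mathcal{A},\mathcal{E},\mathcal{R})$ with $\mathcal{E}$ a set of epistemic literals $\mathbf{not}\,\ell$ and rules $a_1\vee\cdots\vee a_k\leftarrow \ell_1,\ldots,\ell_m,\xi_1,\ldots,\xi_j,\neg\xi_{j+1},\ldots,\neg\xi_n$, $\xi_i\in\mathcal{E}$. A guess is $\Phi\subseteq\mathcal{E}$; $\mathcal{I}$ is $\Phi$-compatible w.r.t. $\mathcal{E}$ iff $\mathcal{I}\neq\emptyset$, every $\mathbf{not}\,\ell\in\Phi$ has some $I\in\mathcal{I}$ with $I\not\models\ell$, and every $\mathbf{not}\,\ell\in\mathcal{E}\setminus\Phi$ has $I\models\ell$ for all $I\in\mathcal{I}$. The epistemic reduct $\Pi^\Phi=(\mathcal{A},\mathcal{R}^\Phi)$ replaces each $\mathbf{not}\,\ell\in\Phi$ by $\top$ and every other $\mathbf{not}$ by $\neg$. A candidate world view (CWV) of $\Pi$ is a set $\mathcal{M}=AS(\Pi^\Phi)$ that is $\Phi$-compatible w.r.t. $\mathcal{E}$, for some guess $\Phi$ (its associated guess). A world view (WV) is a CWV whose associated guess $\Phi$ is subset-maximal: no CWV has an associated guess $\Phi'\supset\Phi$. Two ELPs are CWV-equivalent (WV-equivalent) iff their sets of CWVs (WVs) coincide. $\Phi$ is realizable in $\Pi$ iff some subset of $\mathrm{Mods}(\Pi^\Phi)$ is $\Phi$-compatible w.r.t. $\mathcal{E}$. The SE-function: $\mathcal{SE}_\Pi(\Phi)=\mathrm{SE}(\Pi^\Phi)$ if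 $\Phi$ is realizable in $\Pi$, and $\emptyset$ otherwise. *)

(* Defs.v *)
From mathcomp Require Import all_boot.
Set Implicit Arguments. Unset Strict Implicit. Unset Printing Implicit Defensive.

Section ELP.
Variable A : finType.

(* A literal: (true, a) is the atom a, (false, a) is the literal ~a. *)
Definition lit := (bool * A)%type.
Definition interp := {set A}.

Definition sat_lit (I : interp) (l : lit) : bool :=
  if l.1 then l.2 \in I else l.2 \notin I.

(* Complementary literal: used to write ~~l as ~l' (with ~~~a read as ~a). *)
Definition compl_lit (l : lit) : lit := (~~ l.1, l.2).

(* Plain rule  a_1 v ... v a_l <- a_{l+1},...,a_m, ~l_1,...,~l_n
   pneg lists the literals l_i occurring as ~l_i. *)
Record prule := PRule { phead : seq A; ppos : seq A; pneg : seq lit }.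
Definition program := seq prule.

Definition neg_ok (I : interp) (r : prule) : bool :=
  all (fun l => ~~ sat_lit I l) (pneg r).
Definition sat_body (I : interp) (r : prule) : bool :=
  all (fun a => a \in I) (ppos r) && neg_ok I r.
Definition sat_rule (M : interp) (r : prule) : bool :=
  sat_body M r ==> has (fun a => a \in M) (phead r).
Definition is_model (M : interp) (P : program) : bool := all (sat_rule M) P.
Definition Mods (P : program) : {set interp} := [set M | is_model M P].

Definition gl_reduct (P : program) (I : interp) : program :=
  [seq PRule (phead r) (ppos r) [::] | r <- P & neg_ok I r].

Definition is_answer_set (P : program) (M : interp) : bool :=
  is_model M P &&
  [forall M' : {set A}, (M' \proper M) ==> ~~ is_model M' (gl_reduct P M)].
Definition AS (P : program) : {set interp} := [set M | is_answer_set P M].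

Definition SE (P : program) : {set (interp * interp)} :=
  [set XY : interp * interp | [&& XY.1 \subset XY.2, is_model XY.2 P & is_model XY.1 (gl_reduct P XY.2)]].

(* ELP rule  a_1 v...v a_k <- l_1..l_m, xi_1..xi_j, ~xi_{j+1}..~xi_n ;
   an epistemic literal  not l  is represented by the literal l. *)
Record erule := ERule { ehead : seq A; elits : seq lit; epos : seq lit; eneg : seq lit }.

Definition wf_elp (E : {set lit}) (R : seq erule) : Prop :=
  all (fun r => all (fun l => l \in E) (epos r ++ eneg r)) R.

(* Epistemic reduct of a rule: not l in Phi becomes T (dropped from the body);
   a ~T (= falsum) in the body makes the rule vacuous, so it is removed;
   other  not l  become ~l, and  ~ not l  becomes ~~l (written ~(compl l)). *)
Definition erule_reduct (Phi : {set lit}) (r : erule) : option prule :=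
  if has (fun l => l \in Phi) (eneg r) then None
  else Some (PRule (ehead r)
                   [seq l.2 | l <- elits r & l.1]
                   ([seq (true, l.2) | l <- elits r & ~~ l.1]
                    ++ [seq l <- epos r | l \notin Phi]
                    ++ [seq compl_lit l | l <- eneg r])).

Definition ereduct (R : seq erule) (Phi : {set lit}) : program :=
  pmap (erule_reduct Phi) R.

Definition compatible (E Phi : {set lit}) (II : {set interp}) : bool :=
  [&& II != set0,
      [forall l in Phi, [exists I in II, ~~ sat_lit I l]] &
      [forall l in E :\: Phi, [forall I in II, sat_lit I l]]].

Definition cwv_guess (E : {set lit}) (R : seq erule) (Phi : {set lit})
    (M : {set interp}) : Prop :=
  [/\ Phi \subset E, M = AS (ereduct R Phi) & compatible E Phi M].

Definition is_CWV E R (M : {set interp}) : Prop := exists Phi, cwv_guess E R Phi M.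

Definition is_WV E R (M : {set interp}) : Prop :=
  exists Phi, cwv_guess E R Phi M /\
    forall Phi' M', cwv_guess E R Phi' M' -> ~ (Phi \proper Phi').

Definition realizable (E : {set lit}) (R : seq erule) (Phi : {set lit}) : bool :=
  [exists II : {set interp}, (II \subset Mods (ereduct R Phi)) && compatible E Phi II].

Definition SEfun (E : {set lit}) (R : seq erule) (Phi : {set lit})
    : {set (interp * interp)} :=
  if realizable E R Phi then SE (ereduct R Phi) else set0.

End ELP.

(* Main.v *)
Require Import Defs.
From mathcomp Require Import all_boot.

Lemma model_reduct (A : finType) (P : program A) M :
  is_model M P -> is_model M (gl_reduct P M).
Proof.
rewrite /is_model /gl_reduct.
elim: P => //= r P IH /andP[Hr HP].
case E: (neg_ok M r) => /=; rewrite IH // andbT.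
move: Hr; rewrite /sat_rule /sat_body E /= ?andbT.
by rewrite /neg_ok /=.
Qed.

Lemma ASE (A : finType) (P : program A) M :
  is_answer_set P M =
  ((M, M) \in SE P) && [forall M' : {set A}, (M' \proper M) ==> ((M', M) \notin SE P)].
Proof.
rewrite /is_answer_set inE /= subxx /=.
case H: (is_model M P) => //=.
rewrite model_reduct //=.
apply: eq_forallb => M'.
case Hp: (M' \proper M) => //=.
by rewrite inE /= H (proper_sub Hp).
Qed.

Lemma AS_eq (A : finType) (P1 P2 : program A) :
  SE P1 = SE P2 -> AS P1 = AS P2.
Proof. by move=> H; apply/setP => M; rewrite !inE !ASE H. Qed.

Lemma AS_SE (A : finType) (P : program A) M :
  M \in AS P -> (M, M) \in SE P.
Proof. by rewrite inE ASE => /andP[]. Qed.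

Lemma AS_Mods (A : finType) (P : program A) :
  AS P \subset Mods P.
Proof. by apply/subsetP => M; rewrite !inE /is_answer_set => /andP[]. Qed.

Lemma guess_transfer (A : finType) (E : {set lit A}) (R1 R2 : seq (erule A)) :
  (forall Phi : {set lit A}, Phi \subset E -> SEfun E R1 Phi = SEfun E R2 Phi) ->
  forall Phi M, cwv_guess E R1 Phi M -> cwv_guess E R2 Phi M.
Proof.
move=> Hse Phi M [HPhi HM Hc]; split => //.
have HR1 : realizable E R1 Phi.
  apply/existsP; exists M; rewrite Hc andbT HM; exact: AS_Mods.
have := Hse Phi HPhi; rewrite /SEfun HR1.
case: (realizable E R2 Phi) => Heq; first by rewrite HM (AS_eq _ _ _ Heq).
exfalso; move: Hc; rewrite /compatible => /and3P[/set0Pn[M0 HM0] _ _].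
have := @AS_SE A (ereduct R1 Phi) M0; rewrite -HM => /(_ HM0).
by rewrite Heq inE.
Qed.

Theorem lemma2 (A : finType) (E : {set lit A}) (R1 R2 : seq (erule A)) :
  wf_elp E R1 -> wf_elp E R2 ->
  (forall Phi : {set lit A}, Phi \subset E -> SEfun E R1 Phi = SEfun E R2 Phi) ->
  (forall M : {set {set A}}, is_CWV E R1 M <-> is_CWV E R2 M) /\
  (forall M : {set {set A}}, is_WV E R1 M <-> is_WV E R2 M).
Proof.
move=> _ _ H.
have H' : forall Phi : {set lit A}, Phi \subset E -> SEfun E R2 Phi = SEfun E R1 Phi.
  by move=> Phi HP; rewrite H.
have T12 := guess_transfer _ _ _ _ H; have T21 := guess_transfer _ _ _ _ H'.
split=> M; split.
- by case=> Phi /T12 ?; exists Phi.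
- by case=> Phi /T21 ?; exists Phi.
- case=> Phi [/T12 G Hm]; exists Phi; split => // Phi' M' /T21; exact: Hm.
- case=> Phi [/T21 G Hm]; exists Phi; split => // Phi' M' /T12; exact: Hm.
Qed.
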